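(* Fix $p \in (0,1)$ and $c>0$, and for $x>0$ let $\alpha_x := 1-p(1-e^{-cx})$ and $f(x) := (2\alpha_x)^{1/x}$. If $p \le \frac12$, then $f$ is strictly decreasing on $(0,\infty)$. If $p>\frac12$, then there exists $x_* \in (0,\infty)$ such that $f$ is strictly decreasing on $(0,x_*]$ and strictly increasing on $[x_*,\infty)$. *)

(* Defs.v *)
From Stdlib Require Import Reals.
Open Scope R_scope.

Definition alpha (p c x : R) : R := 1 - p * (1 - exp (- (c * x))).

(* f(x) = (2 alpha_x)^{1/x}; 2 alpha_x > 0 for p in (0,1), so Rpower is the real power. *)
Definition fA3 (p c x : R) : R := Rpower (2 * alpha p c x) (1 / x).

(* Main.v *)
Require Import Defs.
From Stdlib Require Import Reals Lra.
From Coquelicot Require Import Coquelicot.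
Open Scope R_scope.

Section S.
Variables p c : R.
Hypothesis hp0 : 0 < p. Hypothesis hp1 : p < 1. Hypothesis hc : 0 < c.

Lemma alpha_pos x : 1 - p < alpha p c x.
Proof. unfold alpha. pose proof (exp_pos (- (c*x))). nra. Qed.

Definition h x := ln (2 * alpha p c x).
Definition h' x := - (c * p * exp (-(c*x))) / alpha p c x.
Definition N x := x * h' x - h x.
Definition g x := 1 / x * h x.

Lemma h_der x : is_derive h x (h' x).
Proof.
  pose proof (alpha_pos x) as Ha. unfold h, h', alpha in *.
  auto_derive. lra. field. lra.
Qed.

Lemma N_der x : is_derive N x (x * (c^2 * p * (1-p) * exp (-(c*x)) / (alpha p c x)^2)).
Proof.
  pose proof (alpha_pos x) as Ha. unfold N, h, h', alpha in *.
  auto_derive. repeat split; lra. field. lra.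
Qed.

Lemma g_der x : 0 < x -> is_derive g x (N x / x^2).
Proof.
  intro hx. pose proof (alpha_pos x) as Ha.
  assert (Hb : 1 - p * (1 - exp (-(c*x))) <> 0) by (unfold alpha in Ha; lra).
  unfold g, N, h, h', alpha in *.
  auto_derive. repeat split; lra. set (L := ln _). set (E := exp _). field. split; [unfold E; lra|lra].
Qed.

Lemma ln_le_sub1 y : 0 < y -> ln y <= y - 1.
Proof.
  intro hy. destruct (Req_dec (ln y) 0) as [e|e].
  - rewrite e. assert (y = 1). { rewrite <- (exp_ln y hy), e, exp_0. reflexivity. } lra.
  - pose proof (exp_ineq1 _ e). rewrite exp_ln in H by lra. lra.
Qed.

Lemma N_incr x y : 0 <= x -> x < y -> N x < N y.
Proof.
  intros hx hxy.
  destruct (MVT_cor2 N (fun x => x * (c^2 * p * (1-p) * exp (-(c*x)) / (alpha p c x)^2)) x y hxy)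
    as [z [hz1 hz2]].
  { intros z _. apply is_derive_Reals, N_der. }
  pose proof (alpha_pos z) as Ha. pose proof (exp_pos (-(c*z))) as He.
  assert (0 < z * (c ^ 2 * p * (1 - p) * exp (- (c * z)) / alpha p c z ^ 2)).
  { apply Rmult_lt_0_compat; [lra|]. apply Rdiv_lt_0_compat.
    - repeat apply Rmult_lt_0_compat; try lra; try (apply pow_lt; lra).
    - apply pow_lt; lra. }
  assert (0 < (z * (c ^ 2 * p * (1 - p) * exp (- (c * z)) / alpha p c z ^ 2)) * (y - x))
    by (apply Rmult_lt_0_compat; lra).
  lra.
Qed.

Lemma g_mvt x y : 0 < x -> x < y -> exists z, g y - g x = N z / z^2 * (y - x) /\ x < z < y.
Proof.
  intros hx hxy. apply MVT_cor2; auto.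
  intros z hz. apply is_derive_Reals, g_der. lra.
Qed.

Lemma hprime_neg x : h' x < 0.
Proof.
  unfold h'. pose proof (alpha_pos x). pose proof (exp_pos (-(c*x))).
  unfold Rdiv. rewrite Ropp_mult_distr_l_reverse.
  apply Ropp_lt_gt_0_contravar. apply Rmult_lt_0_compat.
  - repeat apply Rmult_lt_0_compat; lra.
  - apply Rinv_0_lt_compat. lra.
Qed.

Lemma N_neg_half x : p <= 1/2 -> 0 < x -> N x < 0.
Proof.
  intros hp hx. unfold N. pose proof (hprime_neg x).
  assert (x * h' x < 0) by nra.
  assert (0 < h x).
  { unfold h. rewrite <- ln_1. apply ln_increasing; [lra|]. pose proof (alpha_pos x). lra. }
  lra.
Qed.

Lemma N_at_a : 1/2 < p -> exists a, 0 < a /\ N a < 0.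
Proof.
  intro hp.
  set (a := ln (2*p/(2*p-1)) / c).
  assert (hq : 1 < 2*p/(2*p-1)).
  { apply (Rmult_lt_reg_r (2*p-1)); [lra|]. unfold Rdiv. rewrite Rmult_assoc, Rinv_l; lra. }
  assert (ha : 0 < a).
  { unfold a. apply Rdiv_lt_0_compat; [|lra]. rewrite <- ln_1. apply ln_increasing; lra. }
  exists a. split; [exact ha|].
  assert (hE : exp (-(c*a)) = (2*p-1)/(2*p)).
  { unfold a. replace (c * (ln (2 * p / (2 * p - 1)) / c)) with (ln (2 * p / (2 * p - 1))) by (field; lra).
    rewrite exp_Ropp, exp_ln by lra. field. lra. }
  assert (hh : h a = 0).
  { unfold h, alpha. rewrite hE. replace (2 * (1 - p * (1 - (2 * p - 1) / (2 * p)))) with 1 by (field; lra).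
    apply ln_1. }
  unfold N. rewrite hh. pose proof (hprime_neg a). nra.
Qed.

Lemma N_at_b : 1/2 < p -> exists b, 0 < b /\ 0 < N b.
Proof.
  intro hp.
  set (K := 8*p + 4*p/(1-p)).
  assert (hK : 0 < K).
  { unfold K. assert (0 < 4*p/(1-p)) by (apply Rdiv_lt_0_compat; lra). lra. }
  set (u := 1 + 2*K/(2*p-1)).
  assert (hu : 1 + 2*K/(2*p-1) = u) by reflexivity.
  assert (hKu : K < (2*p-1)*u).
  { rewrite <- hu. field_simplify; [|lra]. lra. }
  assert (hu1 : 1 < u).
  { rewrite <- hu. assert (0 < 2*K/(2*p-1)) by (apply Rdiv_lt_0_compat; lra). lra. }
  set (b := u / c).
  assert (hcb : c * b = u) by (unfold b; field; lra).
  exists b. split. { unfold b. apply Rdiv_lt_0_compat; lra. }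
  set (E := exp (-(c*b))).
  assert (hE0 : 0 < E) by apply exp_pos.
  assert (hEu : E * exp u = 1).
  { unfold E. rewrite hcb, exp_Ropp. field. pose proof (exp_pos u). lra. }
  assert (hexp : u^2 / 4 < exp u).
  { replace u with (u/2 + u/2) at 2 by field. rewrite exp_plus.
    assert (1 + u/2 < exp (u/2)) by (apply exp_ineq1; lra). nra. }
  set (w := E * u).
  assert (hw : w * u < 4).
  { unfold w. nra. }
  assert (hEw : E <= w) by (unfold w; nra).
  assert (hw0 : 0 < w) by (unfold w; nra).
  pose proof (alpha_pos b) as Ha.
  assert (hN1 : - (p * w / (1-p)) <= b * h' b).
  { unfold h'. fold E. unfold w.
    replace (b * (- (c * p * E) / alpha p c b)) with (- (p * (E * (c * b)) / alpha p c b)) by (field; lra).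
    rewrite hcb. apply Ropp_le_contravar. unfold Rdiv. apply Rmult_le_compat_l.
    - assert (0 < E*u) by nra. nra.
    - apply Rlt_le, Rinv_lt_contravar; nra. }
  assert (hN2 : h b <= 1 - 2*p + 2*p*E).
  { unfold h. eapply Rle_trans. apply ln_le_sub1; lra. unfold alpha. fold E. lra. }
  assert (hsum : 2*p*w + p*w/(1-p) = w * (K/4)) by (unfold K; field; lra).
  assert (hwK : w * (K/4) * u < K) by nra.
  assert (hwK2 : w * (K/4) < 2*p-1) by nra.
  unfold N.
  assert (2*p*E <= 2*p*w) by nra.
  lra.
Qed.
End S.

Lemma fA3_eq p c x : fA3 p c x = exp (g p c x).
Proof. reflexivity. Qed.

Theorem claimA3 (p c : R) (hp0 : 0 < p) (hp1 : p < 1) (hc : 0 < c) :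
  (p <= 1/2 ->
     forall x y : R, 0 < x -> x < y -> fA3 p c y < fA3 p c x) /\
  (1/2 < p ->
     exists xs : R, 0 < xs /\
       (forall x y : R, 0 < x -> x < y -> y <= xs -> fA3 p c y < fA3 p c x) /\
       (forall x y : R, xs <= x -> x < y -> fA3 p c x < fA3 p c y)).
Proof.
  split.
  - intros hp x y hx hxy. rewrite !fA3_eq. apply exp_increasing.
    destruct (g_mvt p c hp0 hp1 x y hx hxy) as [z [hz1 hz2]].
    pose proof (N_neg_half p c hp0 hp1 hc z hp ltac:(lra)).
    assert (N p c z / z^2 * (y - x) < 0).
    { assert (0 < z^2) by (apply pow_lt; lra).
      assert (N p c z / z^2 < 0).
      { unfold Rdiv. assert (0 < / z^2) by (apply Rinv_0_lt_compat; lra). nra. }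
      nra. }
    lra.
  - intro hp.
    destruct (N_at_a p c hp0 hp1 hc hp) as [a [ha hNa]].
    destruct (N_at_b p c hp0 hp1 hc hp) as [b [hb hNb]].
    assert (hab : a < b).
    { destruct (Rlt_or_le a b) as [h|h]; [exact h|].
      destruct (Req_dec a b) as [e|e]; [subst; lra|].
      pose proof (N_incr p c hp0 hp1 hc b a ltac:(lra) ltac:(lra)). lra. }
    assert (hcont : continuity (N p c)).
    { intro x. apply continuity_pt_filterlim. apply (ex_derive_continuous (N p c)).
      eexists. apply N_der; auto. }
    destruct (IVT (N p c) a b hcont hab hNa hNb) as [xs [hxs hN0]].
    exists xs. split; [lra|]. split.
    + intros x y hx hxy hy. rewrite !fA3_eq. apply exp_increasing.
      destruct (g_mvt p c hp0 hp1 x y hx hxy) as [z [hz1 hz2]].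
      pose proof (N_incr p c hp0 hp1 hc z xs ltac:(lra) ltac:(lra)).
      assert (0 < z^2) by (apply pow_lt; lra).
      assert (N p c z / z^2 < 0).
      { unfold Rdiv. assert (0 < / z^2) by (apply Rinv_0_lt_compat; lra). nra. }
      nra.
    + intros x y hx hxy. rewrite !fA3_eq. apply exp_increasing.
      destruct (g_mvt p c hp0 hp1 x y ltac:(lra) hxy) as [z [hz1 hz2]].
      pose proof (N_incr p c hp0 hp1 hc xs z ltac:(lra) ltac:(lra)).
      assert (0 < z^2) by (apply pow_lt; lra).
      assert (0 < N p c z / z^2).
      { unfold Rdiv. assert (0 < / z^2) by (apply Rinv_0_lt_compat; lra). nra. }
      nra.
Qed.
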